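(* Let $m\geq1$ and $k\geq2$ be integers, and let $H$ be an $m$-connected, $(n-km+2m-1)$-closed graph of order $n\geq(7k-2)m+4$. If $e(H)\geq\binom{n-(k-1)m-2}{2}+(k-1)m^2+(k+1)m+3$, then $\omega(H)\geq n-(k-1)m-1$.
   Context: All graphs are finite and simple; $e(H)$ is the number of edges and $\omega(H)$ the clique number. A graph $H$ is $l$-closed if every pair of nonadjacent vertices $u,v$ satisfies $d_H(u)+d_H(v)<l$. *)

(* Defs.v *)
(* A finite simple graph is a symmetric irreflexive relation
   [e : rel T] on a finite vertex type [T]. *)
From mathcomp Require Import all_boot.
Set Implicit Arguments. Unset Strict Implicit. Unset Printing Implicit Defensive.

Section Graphs.
Variables (T : finType) (e : rel T).

Definition deg (x : T) : nat := #|[set y | e x y]|.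

Definition is_clique (A : {set T}) : bool :=
  [forall x in A, forall y in A, (x != y) ==> e x y].

Definition nedges : nat :=
  #|[set A : {set T} | (#|A| == 2) && is_clique A]|.

Definition clique_number : nat := \max_(A : {set T} | is_clique A) #|A|.

Definition connected_without (S : {set T}) : Prop :=
  forall x y, x \notin S -> y \notin S ->
    connect [rel u v | [&& e u v, u \notin S & v \notin S]] x y.

Definition k_connected (m : nat) : Prop :=
  m < #|T| /\ forall S : {set T}, #|S| < m -> connected_without S.

Definition l_closed (l : nat) : Prop :=
  forall u v, u != v -> ~~ e u v -> deg u + deg v < l.

End Graphs.

(* Main.v *)
Require Import Defs.
From mathcomp Require Import all_boot zify.
Lemma large (t q m a b : nat) : 1 <= m -> m <= q -> 6*q+5*m+3 <= t -> t+m+1 <= 2*a -> a+1 <= t -> a+b = t+q+1 ->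
  a*(a-1) + 2*(b*(t+m-a)) < (t-1)*(t-2) + 2*(q*m+q+2*m+3).
Proof. move=> h1 h2 h3 h4 h5 h6.
have [v hv] : exists v, 3*a = t+2*q+2*m+6+v by exists (3*a - (t+2*q+2*m+6)); lia.
have [u hu] : exists u, t = a + 1 + u by exists (t - a - 1); lia.
subst t. 
have -> : b = q + 2 + u by lia.
have -> : a + 1 + u + m - a = 1 + u + m by lia.
have -> : (a + 1 + u - 1) = a + u by lia.
have -> : (a + 1 + u - 2) = a + u - 1 by lia.
have ha : 1 <= a by lia.
move: (ha) hv; case: a {h3 h4 h5 h6 ha} => // a _ hv.
have -> : a.+1 - 1 = a by lia.
have -> : a.+1 + u - 1 = a + u by lia.
have hv2 : 3*a.+1*u = (a.+1 + 1 + u + 2 * q + 2 * m + 6 + v)*u by rewrite hv.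
nia.
Qed.

Lemma small (t q m a b : nat) : 1 <= m -> m <= q -> 6*q+5*m+3 <= t -> 2*a <= t+m -> a+b = t+q+1 ->
  2*(a*(t+q)) + b*(t+m-1) < 2*((t-1)*(t-2)) + 4*(q*m+q+2*m+3).
Proof. move=> h1 h2 h3 h4 h5.
have [x hx] : exists x, q = 1 + x by exists (q-1); lia.
have [y hy] : exists y, m = 1 + y by exists (m-1); lia.
have [d hd] : exists d, t = 14 + 6*x + 5*y + d by exists (t - (14 + 6*x + 5*y)); lia.
have [w hw] : exists w, 2*a + w = t + m by exists (t+m-2*a); lia.
have hyx : y <= x by lia.
subst q m t.
have -> : 14 + 6 * x + 5 * y + d + (1 + y) - 1 = 14 + 6*x + 6*y + d by lia.
have -> : 14 + 6 * x + 5 * y + d - 1 = 13 + 6*x + 5*y + d by lia.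
have -> : 14 + 6 * x + 5 * y + d - 2 = 12 + 6*x + 5*y + d by lia.
have hb : (a + b)*(14 + 6*x + 6*y + d) = (14 + 6 * x + 5 * y + d + (1 + x) + 1)*(14 + 6*x + 6*y + d) by rewrite h5.
have hw2 : (2*a + w)*(16 + 8*x + 4*y + d) = (14 + 6 * x + 5 * y + d + (1 + y))*(16 + 8*x + 4*y + d) by rewrite hw.
case: (boolP (x + y + d == 0)) => [/eqP hz | /eqP hz].
  have [hx0 hy0 hd0] : [/\ x = 0, y = 0 & d = 0] by split; lia.
  subst x y d.
  have : a <= 7 by lia. lia.
rewrite -(ltn_pmul2l (_ : 0 < 2)) //.
have := leq0n (x*y). have := leq0n (d*x). have := leq0n (d*y). have := leq0n (x*x). have := leq0n (y*y). have := leq0n (d*d).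
have := leq0n (w*x). have := leq0n (w*y). have := leq0n (w*d).
lia.
Qed.

Lemma card_sum (U : finType) (S : {set U}) (P : pred U) :
  #|[set z in S | P z]| = \sum_(z in S) (P z : nat).
Proof.
rewrite -sum1_card big_mkcond /= [RHS]big_mkcond /=.
apply: eq_bigr => z _; rewrite inE; by case: (z \in S); case: (P z).
Qed.

Lemma sum_split (U : finType) (A : {set U}) (F : U -> nat) :
  \sum_x F x = \sum_(x in A) F x + \sum_(x in ~: A) F x.
Proof.
rewrite (bigID (mem A)) /=; congr (_ + _); apply: eq_bigl => x; by rewrite ?inE.
Qed.

Section G.
Variables (T : finType) (e : rel T).
Hypothesis e_sym : symmetric e.
Hypothesis e_irr : irreflexive e.

Lemma deg_sum x : deg e x = \sum_z (e x z : nat).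
Proof.
rewrite /deg (_ : [set y | e x y] = [set z in setT | e x z]); last by apply/setP => z; rewrite !inE.
rewrite card_sum; apply: eq_bigl => z; by rewrite inE.
Qed.

Lemma handshake : 2 * nedges e <= \sum_x deg e x.
Proof.
set S2 := [set B : {set T} | (#|B| == 2) && is_clique e B].
have h1 : 2 * #|S2| = \sum_(B in S2) #|B|.
  rewrite mulnC -sum_nat_const; apply: eq_bigr => B; rewrite inE => /andP [/eqP -> _] //.
rewrite /nedges -/S2 h1.
have h2 : forall B : {set T}, #|B| = \sum_x (x \in B : nat).
  move=> B; rewrite -sum1_card big_mkcond; apply: eq_bigr => z _; by case: (z \in B).
rewrite (eq_bigr _ (fun B _ => h2 B)) exchange_big /=.
apply: leq_sum => x _.
rewrite -card_sum.
apply: leq_trans (leq_imset_card (fun y => [set x; y]) [set y | e x y]).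
apply: subset_leq_card; apply/subsetP => B; rewrite !inE => /andP [/andP [/cards2P [u [v [uv ->]]] hc] xB].
have hcl : forall p r, p \in [set u; v] -> r \in [set u; v] -> p != r -> e p r.
  move=> p r hp hr hpr.
  by move: hc => /forallP /(_ p) /implyP /(_ hp) /forallP /(_ r) /implyP /(_ hr) /implyP /(_ hpr).
move: xB; rewrite !inE => /orP [/eqP -> | /eqP ->].
- apply/imsetP; exists v => //.
  rewrite inE; apply: hcl => //; by rewrite !inE eqxx ?orbT.
- apply/imsetP; exists u; last by rewrite setUC.
  rewrite inE; apply: hcl; by rewrite ?inE ?eqxx ?orbT // eq_sym.
Qed.


Lemma sumA_bound (A : {set T}) :
  \sum_(y in A) deg e y <= #|A| * (#|A| - 1) + \sum_(z in ~: A) deg e z.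
Proof.
rewrite (eq_bigr _ (fun y _ => deg_sum y)).
rewrite (eq_bigr _ (fun y _ => @sum_split _ A (fun z => (e y z : nat)))) big_split /=.
apply: leq_add.
  rewrite -sum_nat_const; apply: leq_sum => y yA.
  rewrite -card_sum (cardsD1 y A) yA add1n subSS subn0.
  apply: subset_leq_card; apply/subsetP => z; rewrite !inE => /andP [zA ezy].
  rewrite zA andbT; apply/eqP => zy; by rewrite zy e_irr in ezy.
rewrite exchange_big /=; apply: leq_sum => z _.
rewrite deg_sum (@sum_split _ A) -[X in X <= _]addn0 leq_add //.
apply: eq_leq; apply: eq_bigr => y _; by rewrite e_sym.
Qed.

Lemma deg_le_n1 x : deg e x <= #|T| - 1.
Proof.
rewrite /deg -cardsT (cardsD1 x setT) inE add1n subSS subn0.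
apply: subset_leq_card; apply/subsetP => z; rewrite !inE => ezx.
rewrite andbT; apply/eqP => zx; by rewrite zx e_irr in ezx.
Qed.

End G.

Theorem lemma3p1 (T : finType) (e : rel T)
  (e_sym : symmetric e) (e_irr : irreflexive e) (m k n : nat) :
  1 <= m -> 2 <= k -> #|T| = n ->
  k_connected e m ->
  l_closed e (n - k * m + 2 * m - 1) ->
  (7 * k - 2) * m + 4 <= n ->
  'C(n - (k - 1) * m - 2, 2) + (k - 1) * m ^ 2 + (k + 1) * m + 3 <= nedges e ->
  n - (k - 1) * m - 1 <= clique_number e.
Proof.
move=> hm hk hn _ hcl hn0 hE.
set l := n - k * m + 2 * m - 1 in hcl.
set A := [set x | l <= 2 * deg e x].
have Acl : is_clique e A.
  apply/forallP => x; apply/implyP => xA; apply/forallP => y; apply/implyP => yA.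
  apply/implyP => xy; case: (boolP (e x y)) => // nxy.
  have := hcl x y xy nxy. move: xA yA; rewrite !inE. lia.
have hA : #|A| <= clique_number e.
  exact: (@leq_bigmax_cond _ (is_clique e) (fun B => #|B|) A Acl).
rewrite leqNgt; apply/negP => hlt.
have hdegA : forall y, y \in A -> #|A| - 1 <= deg e y.
  move=> y yA; rewrite /deg (cardsD1 y A) yA add1n subSS subn0.
  apply: subset_leq_card; apply/subsetP => z /setD1P [zy zA]; rewrite inE.
  by move: Acl => /forallP /(_ y) /implyP /(_ yA) /forallP /(_ z) /implyP /(_ zA) /implyP; apply; rewrite eq_sym.
have hlight : forall x, x \notin A -> 2 * deg e x < l.
  by move=> x; rewrite inE -ltnNge.
have hsum := @handshake T e.
rewrite (@sum_split _ A) in hsum.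
have hSA := @sumA_bound T e e_sym e_irr A.
have hb : #|A| + #|~: A| = n by rewrite cardsC.
move: hA hlt hE hn0 hcl hdegA hlight hsum hSA hb.
set a := #|A|. set b := #|~: A|.
set SA := \sum_(y in A) deg e y. set SB := \sum_(z in ~: A) deg e z.
move=> hA hlt hE hn0 hcl hdegA hlight hsum hSA hb.
have [k' hk'] : exists k', k = k'.+2 by exists (k - 2); lia.
subst k.
set q := k'.+1 * m.
have hq1 : k'.+2 - 1 = k'.+1 by [].
rewrite hq1 -/q in hE hlt.
have hqm : q * m = k'.+1 * m ^ 2 by rewrite /q -mulnA mulnn.
rewrite -hqm in hE.
have hkm : k'.+2 * m = q + m by rewrite /q mulSn addnC.
have hk1 : (k'.+2 + 1) * m = q + 2 * m by rewrite /q addn1 !mulSn; lia.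
have h7 : (7 * k'.+2 - 2) * m = 7 * q + 5 * m.
  by rewrite /q (_ : 7 * k'.+2 - 2 = 7 * k'.+1 + 5) ?mulnDl ?mulnA //; lia.
rewrite hk1 in hE. rewrite h7 in hn0.
have [t ht] : exists t, n = t + q + 1 by exists (n - q - 1); lia.
subst n.

have hl2 : l = t + m by rewrite /l ht hkm; lia.
rewrite ht in hlt hn0 hE hb.
rewrite hl2 in hcl hlight.
have hC : 'C(t + q + 1 - q - 2, 2) * 2 = (t - 1) * (t - 2).
  have -> : t + q + 1 - q - 2 = t - 1 by lia.
  have := bin_ffact (t - 1) 2. rewrite ffactnS ffactn1 /= => ->.
  congr (_ * _); lia.
have hm' : m <= q by rewrite /q mulSn leq_addr.
have ht0 : 6 * q + 5 * m + 3 <= t by lia.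
have hat : a + 1 <= t by lia.
move: hC hE; set X := 'C(_, 2) => hC hE.
case: (leqP (2 * a) (t + m)) => hcase.
-
  have hSA' : SA <= a * (t + q).
    rewrite /SA /a -sum_nat_const; apply: leq_sum => y _.
    have := @deg_le_n1 T e e_irr y. rewrite ht. lia.
  have hSB : 2 * SB <= b * (t + m - 1).
    rewrite /SB /b big_distrr /= -sum_nat_const; apply: leq_sum => x.
    rewrite inE => /hlight. lia.
  have := @small t q m a b hm hm' ht0 hcase hb.
  move: hSA' hSB hsum hE hC.
  move: (a * (t + q)) (b * (t + m - 1)) ((t - 1) * (t - 2)) => P1 P2 P3.
  lia.
-
  have hdB : forall x, x \notin A -> deg e x <= t + m - a.
    move=> x xA.
    have : ~~ (A \subset [set y | e x y]).
      apply/negP => sub; have := subset_leq_card sub; rewrite -/a => h.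
      have := hlight x xA. rewrite /deg in h |- *. lia.
    case/subsetPn => y yA; rewrite inE => nxy.
    have xy : x != y by apply/eqP => exy; move: xA; rewrite exy yA.
    have := hcl x y xy nxy. have := hdegA y yA. lia.
  have hSB : SB <= b * (t + m - a).
    rewrite /SB /b -sum_nat_const; apply: leq_sum => x; rewrite inE; exact: hdB.
  have := @large t q m a b hm hm' ht0 ltac:(lia) hat hb.
  move: hSB hsum hE hC hSA.
  move: (a * (a - 1)) (b * (t + m - a)) ((t - 1) * (t - 2)) => P1 P2 P3.
  lia.
Qed.
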